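(* Let $(V,\langle\cdot\,,\cdot\rangle_V)$ be an admissible integral $\mathrm{Cl}_{r,s}$-module and $(U,(\cdot\,,\cdot)_U)$ an admissible integral $\mathrm{Cl}_{8,0}$-module with positive definite inner product $(\cdot\,,\cdot)_U$, such that the representations $J_{y_j}\in\mathrm{End}(U)$ permute the integral basis of $U$ up to sign for all orthonormal generators $y_1,\ldots,y_8$ of $\mathrm{Cl}_{8,0}$. Then $V\otimes U$ with the scalar product $\langle v\otimes u,v'\otimes u'\rangle=\langle v,v'\rangle_V(u,u')_U$ is (carries the structure of) an admissible integral $\mathrm{Cl}_{r+8,s}$-module.
   Context: A scalar product is a real symmetric non-degenerate bilinear form. $\mathrm{Cl}_{p,q}$ is the real Clifford algebra generated by $\mathbb R^{p,q}$ ($\mathbb R^{p+q}$ with quadratic form $x_1^2+\dots+x_p^2-x_{p+1}^2-\dots-x_{p+q}^2$) with relation $z^2=-\langle z,z\rangle\cdot1$; orthonormal generators $z_k$ satisfy $\langle z_k,z_l\rangle=0$ ($k\ne l$), $\langle z_k,z_k\rangle=\pm1$. A $\mathrm{Cl}_{p,q}$-module $V$ with representation $J$ is admissible if it carries a scalar product with $\langle J_zu,v\rangle_V=-\langle u,J_zv\rangle_V$ for all $z,u,v$; it is an admissible integral module if it has an integral basis, i.e. a basis $\{v_\alpha\}$ with $\langle v_\alpha,v_\beta\rangle_V=0$ ($\alpha\ne\beta$), $\langle v_\alpha,v_\alpha\rangle_V=\pm1$, and $\langle J_{z_k}v_\alpha,v_\beta\rangle_V\in\{1,-1,0\}$ for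 all orthonormal generators $z_k$ and all $\alpha,\beta$. An operator permutes a basis up to sign if it sends each basis vector to $\pm$ some basis vector. *)

(* Defs.v *)
From HB Require Import structures.
From mathcomp Require Import all_boot all_order all_algebra.
From mathcomp Require Import reals.
Set Implicit Arguments. Unset Strict Implicit. Unset Printing Implicit Defensive.
Import Order.TTheory GRing.Theory Num.Theory.
Local Open Scope ring_scope.

(* Vectors of a module of dimension n are row vectors 'rV_n; an endomorphism
   is a matrix A acting by u |-> u *m A. *)

Section Defs.
Variable R : realType.

Definition qform (p q : nat) (z : 'rV[R]_(p + q)) : R :=
  \sum_(k < p + q) (if (val k < p)%N then 1 else -1) * z 0 k ^+ 2.

Definition bform (n : nat) (G : 'M[R]_n) (u v : 'rV[R]_n) : R :=
  (u *m G *m v^T) 0 0.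

Definition scalar_product (n : nat) (G : 'M[R]_n) : Prop :=
  G^T = G /\ G \in unitmx.

Definition pos_def (n : nat) (G : 'M[R]_n) : Prop :=
  forall u : 'rV[R]_n, u != 0 -> 0 < bform G u u.

Definition cliff_op (p q n : nat) (Jg : 'I_(p + q) -> 'M[R]_n)
  (z : 'rV[R]_(p + q)) : 'M[R]_n := \sum_(k < p + q) z 0 k *: Jg k.

Definition cl_rep (p q n : nat) (Jg : 'I_(p + q) -> 'M[R]_n) : Prop :=
  forall z, cliff_op Jg z *m cliff_op Jg z = - (qform z)%:M.

Definition admissible (p q n : nat) (Jg : 'I_(p + q) -> 'M[R]_n)
  (G : 'M[R]_n) : Prop :=
  [/\ cl_rep Jg, scalar_product G &
      forall z (u v : 'rV[R]_n),
        bform G (u *m cliff_op Jg z) v = - bform G u (v *m cliff_op Jg z)].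

Definition is_basis (n : nat) (b : 'I_n -> 'rV[R]_n) : Prop :=
  (\matrix_(i < n) b i) \in unitmx.

Definition integral_basis (p q n : nat) (Jg : 'I_(p + q) -> 'M[R]_n)
  (G : 'M[R]_n) (b : 'I_n -> 'rV[R]_n) : Prop :=
  [/\ is_basis b,
      forall a c, a != c -> bform G (b a) (b c) = 0,
      forall a, bform G (b a) (b a) = 1 \/ bform G (b a) (b a) = -1 &
      forall (k : 'I_(p + q)) a c,
        let x := bform G (b a *m Jg k) (b c) in x = 1 \/ x = -1 \/ x = 0].

Definition admissible_integral (p q n : nat) (Jg : 'I_(p + q) -> 'M[R]_n)
  (G : 'M[R]_n) : Prop :=
  admissible Jg G /\ exists b, integral_basis Jg G b.

Definition perm_up_to_sign (n : nat) (A : 'M[R]_n) (b : 'I_n -> 'rV[R]_n) :=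
  forall a, exists c, b a *m A = b c \/ b a *m A = - b c.

(* V (x) U identified with R^(n*m); pure tensor v (x) u *)
Definition tens (n m : nat) (v : 'rV[R]_n) (u : 'rV[R]_m) : 'rV[R]_(n * m) :=
  mxvec (v^T *m u).

End Defs.

(* Main.v *)
Require Import Defs.
From HB Require Import structures.
From mathcomp Require Import all_boot all_order all_algebra.
From mathcomp Require Import reals.
From mathcomp Require Import zify ring lra.
Import Order.TTheory GRing.Theory Num.Theory.
Local Open Scope ring_scope.

Set Implicit Arguments. Unset Strict Implicit. Unset Printing Implicit Defensive.



Definition dec (n m : nat) (k : 'I_(n * m)) : 'I_n * 'I_m :=
  enum_val (cast_ord (esym (mxvec_cast n m)) k).

Lemma decK n m (i : 'I_n) (j : 'I_m) : dec (mxvec_index i j) = (i, j).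
Proof. by rewrite /dec /mxvec_index cast_ordK enum_rankK. Qed.

Lemma mxvec_index_eq n m (i i' : 'I_n) (j j' : 'I_m) :
  (mxvec_index i j == mxvec_index i' j') = (i == i') && (j == j').
Proof.
apply/idP/idP.
  by move/eqP/(congr1 (@dec n m)); rewrite !decK => -[-> ->]; rewrite !eqxx.
by case/andP=> /eqP -> /eqP ->.
Qed.

Lemma sum_mxvec (R : realType) n m (F : 'I_(n * m) -> R) :
  \sum_k F k = \sum_i \sum_j F (mxvec_index i j).
Proof.
rewrite (reindex _ (curry_mxvec_bij _ _)) /= pair_bigA.
by apply: eq_bigr => -[i j].
Qed.

Definition kron (R : realType) n m (A : 'M[R]_n) (B : 'M[R]_m) : 'M[R]_(n * m) :=
  \matrix_(k, l) (A (dec k).1 (dec l).1 * B (dec k).2 (dec l).2).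

Lemma kronE (R : realType) n m (A : 'M[R]_n) (B : 'M[R]_m) i j i' j' :
  kron A B (mxvec_index i j) (mxvec_index i' j') = A i i' * B j j'.
Proof. by rewrite mxE !decK. Qed.

Lemma kron_mul (R : realType) n m (A C : 'M[R]_n) (B D : 'M[R]_m) :
  kron A B *m kron C D = kron (A *m C) (B *m D).
Proof.
apply/matrixP => k l.
case/mxvec_indexP: k => i j; case/mxvec_indexP: l => i' j'.
rewrite kronE !mxE sum_mxvec big_distrl /=; apply: eq_bigr => a _.
rewrite big_distrr /=; apply: eq_bigr => b _.
by rewrite !kronE mulrACA.
Qed.

Lemma kron_tr (R : realType) n m (A : 'M[R]_n) (B : 'M[R]_m) :
  (kron A B)^T = kron A^T B^T.
Proof. by apply/matrixP => k l; rewrite !mxE. Qed.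

Lemma kron11 (R : realType) n m : kron (1%:M : 'M[R]_n) (1%:M : 'M[R]_m) = 1%:M.
Proof.
apply/matrixP => k l.
case/mxvec_indexP: k => i j; case/mxvec_indexP: l => i' j'.
rewrite kronE !mxE mxvec_index_eq.
by case: (i == i'); case: (j == j'); rewrite ?mulr1 ?mulr0 ?mul0r.
Qed.

Lemma kronZl (R : realType) n m (a : R) (A : 'M[R]_n) (B : 'M[R]_m) :
  kron (a *: A) B = a *: kron A B.
Proof. by apply/matrixP => k l; rewrite !mxE mulrA. Qed.

Lemma kronDl (R : realType) n m (A A' : 'M[R]_n) (B : 'M[R]_m) :
  kron (A + A') B = kron A B + kron A' B.
Proof. by apply/matrixP => k l; rewrite !mxE mulrDl. Qed.

Lemma kronDr (R : realType) n m (A : 'M[R]_n) (B B' : 'M[R]_m) :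
  kron A (B + B') = kron A B + kron A B'.
Proof. by apply/matrixP => k l; rewrite !mxE mulrDr. Qed.

Lemma kronNl (R : realType) n m (A : 'M[R]_n) (B : 'M[R]_m) :
  kron (- A) B = - kron A B.
Proof. by apply/matrixP => k l; rewrite !mxE mulNr. Qed.

Lemma kronNr (R : realType) n m (A : 'M[R]_n) (B : 'M[R]_m) :
  kron A (- B) = - kron A B.
Proof. by apply/matrixP => k l; rewrite !mxE mulrN. Qed.

Lemma kron0r (R : realType) n m (A : 'M[R]_n) :
  kron A (0 : 'M[R]_m) = 0.
Proof. by apply/matrixP => k l; rewrite !mxE mulr0. Qed.

Lemma kron_scal_l (R : realType) n m (a : R) :
  kron (a%:M : 'M[R]_n) (1%:M : 'M[R]_m) = a%:M.
Proof.
have ->: (a%:M : 'M[R]_n) = a *: 1%:M by rewrite scalemx1.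
by rewrite kronZl kron11 scalemx1.
Qed.

Lemma kron_scal_r (R : realType) n m (a : R) :
  kron (1%:M : 'M[R]_n) (a%:M : 'M[R]_m) = a%:M.
Proof.
have ->: (a%:M : 'M[R]_m) = a *: 1%:M by rewrite scalemx1.
have ->: (a%:M : 'M[R]_(n * m)) = a *: kron 1%:M 1%:M by rewrite kron11 scalemx1.
by apply/matrixP => k l; rewrite !mxE mulrCA.
Qed.

Lemma tensE (R : realType) n m (v : 'rV[R]_n) (u : 'rV[R]_m) i j :
  tens v u 0 (mxvec_index i j) = v 0 i * u 0 j.
Proof. by rewrite /tens mxvecE mxE big_ord1 !mxE. Qed.

Lemma tens_kron (R : realType) n m (v : 'rV[R]_n) (u : 'rV[R]_m) A B :
  tens v u *m kron A B = tens (v *m A) (u *m B).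
Proof.
apply/rowP => l; case/mxvec_indexP: l => i' j'.
rewrite tensE !mxE sum_mxvec big_distrl /=; apply: eq_bigr => a _.
rewrite big_distrr /=; apply: eq_bigr => b _.
by rewrite tensE kronE mulrACA.
Qed.

Lemma bform_e (R : realType) n (M : 'M[R]_n) i j :
  bform M (delta_mx 0 i) (delta_mx 0 j) = M i j.
Proof. by rewrite /bform trmx_delta -rowE -colE !mxE. Qed.

Lemma tens_delta (R : realType) n m (i : 'I_n) (j : 'I_m) :
  tens (delta_mx 0 i : 'rV[R]_n) (delta_mx 0 j) = delta_mx 0 (mxvec_index i j).
Proof. by rewrite /tens trmx_delta mul_delta_mx mxvec_delta. Qed.

Lemma G'_kron (R : realType) n m (G : 'M[R]_n) (H : 'M[R]_m) (G' : 'M[R]_(n * m)) :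
  (forall v v' u u', bform G' (tens v u) (tens v' u') = bform G v v' * bform H u u') ->
  G' = kron G H.
Proof.
move=> hG; apply/matrixP => k l.
case/mxvec_indexP: k => i j; case/mxvec_indexP: l => i' j'.
by rewrite kronE -bform_e -!tens_delta hG !bform_e.
Qed.



Lemma zm (V : zmodType) (a b c d e : V) : a + b + (c + d) = e -> b + c = e - a - d.
Proof. move=> <-. apply/eqP; rewrite eq_sym !subr_eq. apply/eqP.
by rewrite [RHS]addrC !addrA. Qed.

Definition eps (R : realType) p q (k : 'I_(p + q)) : R := if (val k < p)%N then 1 else -1.

Definition ACrel (R : realType) p q n (Jg : 'I_(p + q) -> 'M[R]_n) :=
  forall k l, Jg k *m Jg l + Jg l *m Jg k =
              (if k == l then - (2 * eps R k) else 0)%:M.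

Lemma cliff_delta (R : realType) p q n (Jg : 'I_(p + q) -> 'M[R]_n) k :
  cliff_op Jg (delta_mx 0 k) = Jg k.
Proof.
rewrite /cliff_op (bigD1 k) //= big1 => [|l /negbTE hl].
  by rewrite !mxE !eqxx scale1r addr0.
by rewrite !mxE hl andbF scale0r.
Qed.

Lemma cliffD (R : realType) p q n (Jg : 'I_(p + q) -> 'M[R]_n) z w :
  cliff_op Jg (z + w) = cliff_op Jg z + cliff_op Jg w.
Proof.
by rewrite /cliff_op -big_split; apply: eq_bigr => k _; rewrite mxE scalerDl.
Qed.

Definition bq (R : realType) p q (z w : 'rV[R]_(p + q)) : R :=
  \sum_k eps R k * z 0 k * w 0 k.

Lemma qform_bq (R : realType) p q (z : 'rV[R]_(p + q)) : qform z = bq z z.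
Proof. by apply: eq_bigr => k _; rewrite /eps expr2 mulrA. Qed.

Lemma qformD (R : realType) p q (z w : 'rV[R]_(p + q)) :
  qform (z + w) = qform z + qform w + 2 * bq z w.
Proof.
rewrite !qform_bq /bq mulr_sumr -!big_split; apply: eq_bigr => k _ /=.
rewrite !mxE; ring.
Qed.

Lemma bq_delta (R : realType) p q (k l : 'I_(p + q)) :
  bq (delta_mx 0 k) (delta_mx 0 l) = if k == l then eps R k else 0.
Proof.
rewrite /bq (bigD1 k) //= big1 => [|t /negbTE ht]; last by rewrite !mxE ht andbF mulr0 mul0r.
rewrite !mxE !eqxx /= eq_sym; case: (l == k); rewrite /= ?mulr1 ?mulr0; ring.
Qed.

Lemma cl_rep_AC (R : realType) p q n (Jg : 'I_(p + q) -> 'M[R]_n) :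
  cl_rep Jg -> ACrel Jg.
Proof.
move=> hc k l.
have hk := hc (delta_mx 0 k); have hl := hc (delta_mx 0 l).
have hkl := hc (delta_mx 0 k + delta_mx 0 l).
rewrite cliff_delta qform_bq bq_delta eqxx in hk.
rewrite cliff_delta qform_bq bq_delta eqxx in hl.
rewrite cliffD !cliff_delta qformD !qform_bq !bq_delta !eqxx in hkl.
rewrite mulmxDl !mulmxDr hk hl in hkl.
rewrite (zm hkl) -!raddfN -!raddfB /=; congr (_%:M).
case: eqP => [->|_]; ring.
Qed.

Lemma AC_cl_rep (R : realType) p q n (Jg : 'I_(p + q) -> 'M[R]_n) :
  ACrel Jg -> cl_rep Jg.
Proof.
move=> hac z.
set S := \sum_k \sum_l (z 0 k * z 0 l) *: (Jg k *m Jg l).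
have hS : cliff_op Jg z *m cliff_op Jg z = S.
  rewrite /cliff_op mulmx_suml; apply: eq_bigr => k _.
  rewrite mulmx_sumr; apply: eq_bigr => l _.
  by rewrite -scalemxAl -scalemxAr scalerA.
have hS2 : S + S = (- (2 * qform z))%:M.
  transitivity (\sum_k \sum_l (z 0 k * z 0 l) *: (Jg k *m Jg l + Jg l *m Jg k)).
    rewrite {2}/S exchange_big -big_split; apply: eq_bigr => k _.
    rewrite -big_split; apply: eq_bigr => l _ /=.
    by rewrite scalerDr [z 0 l * _]mulrC.
  under eq_bigr do under eq_bigr do rewrite hac scale_scalar_mx.
  under eq_bigr do rewrite -(@raddf_sum _ _ (@scalar_mx R n)).
  rewrite -(@raddf_sum _ _ (@scalar_mx R n)); apply: (congr1 (@scalar_mx R n)).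
  rewrite /qform mulr_sumr -sumrN; apply: eq_bigr => k _.
  rewrite (bigD1 k) //= big1 => [|l /negbTE hl]; last by rewrite eq_sym hl mulr0.
  rewrite eqxx addr0 /eps; case: (val k < p)%N; ring.
rewrite hS.
have -> : S = 2^-1 *: (S + S) by rewrite -mulr2n -scaler_nat scalerA mulVf ?scale1r // pnatr_eq0.
rewrite hS2 scale_scalar_mx -(@raddfN _ _ (@scalar_mx R n)); apply: (congr1 (@scalar_mx R n)); by field.
Qed.

Lemma skew_of_bform (R : realType) n (G A : 'M[R]_n) :
  (forall u v, bform G (u *m A) v = - bform G u (v *m A)) ->
  A *m G = - (G *m A^T).
Proof.
move=> h; apply/matrixP => i j.
rewrite -[(A *m G) i j]bform_e -[(- (G *m A^T)) i j]bform_e /bform.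
have := h (delta_mx 0 i) (delta_mx 0 j); rewrite /bform trmx_mul !mulmxA => ->.
by rewrite mulmxN mulNmx !mulmxA [in RHS]mxE.
Qed.

Lemma bform_of_skew (R : realType) n (G A : 'M[R]_n) :
  A *m G = - (G *m A^T) ->
  (forall u v, bform G (u *m A) v = - bform G u (v *m A)).
Proof.
move=> h u v; rewrite /bform -(mulmxA u) h trmx_mul.
by rewrite mulmxN mulNmx !mulmxA mxE.
Qed.

Lemma skew_cliff (R : realType) p q n (Jg : 'I_(p + q) -> 'M[R]_n) G :
  (forall k, Jg k *m G = - (G *m (Jg k)^T)) ->
  forall z, cliff_op Jg z *m G = - (G *m (cliff_op Jg z)^T).
Proof.
move=> h z; rewrite /cliff_op mulmx_suml linear_sum mulmx_sumr -sumrN.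
apply: eq_bigr => k _.
by rewrite -scalemxAl h linearZ /= -scalemxAr scalerN.
Qed.



Lemma sgn2 (R : fieldType) n : (-1) ^+ n * (-1) ^+ n = 1 :> R.
Proof. by rewrite -exprD addnn -signr_odd odd_double expr0. Qed.

Definition Pm (R : fieldType) k m (Ju : 'I_k -> 'M[R]_m) (l : seq 'I_k) : 'M[R]_m :=
  foldr (fun i M => Ju i *m M) 1%:M l.

Arguments Pm : simpl never.

Lemma PmS (R : fieldType) k m (Ju : 'I_k -> 'M[R]_m) i l :
  Pm Ju (i :: l) = Ju i *m Pm Ju l.
Proof. by []. Qed.

Lemma Pm0 (R : fieldType) k m (Ju : 'I_k -> 'M[R]_m) : Pm Ju [::] = 1%:M.
Proof. by []. Qed.

Fixpoint eN (k : nat) : nat := if k is k'.+1 then k + eN k' else 0.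

Lemma Pcomm (R : fieldType) k m (Ju : 'I_k -> 'M[R]_m) :
  (forall i, Ju i *m Ju i = - 1%:M) ->
  (forall i j, i != j -> Ju i *m Ju j = - (Ju j *m Ju i)) ->
  forall j l, uniq l ->
  Ju j *m Pm Ju l = (-1) ^+ (size l + (j \in l)) *: (Pm Ju l *m Ju j).
Proof.
move=> hsq han j; elim=> [|i l IH] /=; rewrite ?Pm0 ?PmS.
  by rewrite ?in_nil addn0 expr0 scale1r mulmx1 mul1mx.
case/andP=> il ul; rewrite mulmxA in_cons.
case: (eqVneq j i) => [eji|ji] /=; first subst i.
  rewrite -(mulmxA (Ju _)) {1}IH // (negbTE il) addn0 -scalemxAr !mulmxA.
  by rewrite addn1 !exprS !mulN1r opprK.
rewrite han // mulNmx -!mulmxA {1}IH // -scalemxAr -scaleNr.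
by rewrite addSn exprS mulN1r.
Qed.

Lemma Pcomm' (R : fieldType) k m (Ju : 'I_k -> 'M[R]_m) :
  (forall i, Ju i *m Ju i = - 1%:M) ->
  (forall i j, i != j -> Ju i *m Ju j = - (Ju j *m Ju i)) ->
  forall j l, uniq l -> j \notin l ->
  Pm Ju l *m Ju j = (-1) ^+ (size l) *: (Ju j *m Pm Ju l).
Proof.
move=> hsq han j l ul jl.
by rewrite (Pcomm hsq han j ul) (negbTE jl) addn0 scalerA sgn2 scale1r.
Qed.

Lemma PP (R : fieldType) k m (Ju : 'I_k -> 'M[R]_m) :
  (forall i, Ju i *m Ju i = - 1%:M) ->
  (forall i j, i != j -> Ju i *m Ju j = - (Ju j *m Ju i)) ->
  forall l, uniq l -> Pm Ju l *m Pm Ju l = ((-1) ^+ (eN (size l)))%:M.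
Proof.
move=> hsq han; elim=> [|i l IH] /=; rewrite ?Pm0 ?PmS; first by rewrite mulmx1 expr0.
case/andP=> il ul.
rewrite -mulmxA [Pm Ju l *m _]mulmxA (Pcomm' hsq han ul il) -scalemxAl.
rewrite -mulmxA IH // mul_mx_scalar -!scalemxAr hsq scalerA scalerN scale_scalar_mx.
rewrite -(@raddfN _ _ (@scalar_mx R m)); apply: (congr1 (@scalar_mx R m)).
by rewrite addSn exprS exprD; ring.
Qed.

Lemma Padj (R : fieldType) k m (Ju : 'I_k -> 'M[R]_m) (H : 'M[R]_m) :
  (forall i, Ju i *m Ju i = - 1%:M) ->
  (forall i j, i != j -> Ju i *m Ju j = - (Ju j *m Ju i)) ->
  (forall i, Ju i *m H = - (H *m (Ju i)^T)) ->
  forall l, uniq l -> Pm Ju l *m H = (-1) ^+ (eN (size l)) *: (H *m (Pm Ju l)^T).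
Proof.
move=> hsq han hsk; elim=> [|i l IH] /=; rewrite ?Pm0 ?PmS; first by rewrite trmx1 mulmx1 mul1mx expr0 scale1r.
case/andP=> il ul.
rewrite -mulmxA IH // -scalemxAr mulmxA hsk mulNmx -mulmxA -trmx_mul.
rewrite (Pcomm' hsq han ul il) linearZ /= -scalemxAr scalerN scalerA -scaleNr.
by congr (_ *: _); rewrite addSn exprS exprD; ring.
Qed.

Lemma Pperm (R : realType) k m (Ju : 'I_k -> 'M[R]_m) (b : 'I_m -> 'rV[R]_m) :
  (forall j, perm_up_to_sign (Ju j) b) ->
  forall l, perm_up_to_sign (Pm Ju l) b.
Proof.
move=> hp; elim=> [|i l IH] a /=; rewrite ?Pm0 ?PmS; first by exists a; left; rewrite mulmx1.
have [c hc] := hp i a; have [d hd] := IH c.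
exists d; rewrite mulmxA.
by case: hc => ->; rewrite ?mulNmx; case: hd => ->; rewrite ?opprK; auto.
Qed.



Definition tri (R : realType) (x : R) := x = 1 \/ x = -1 \/ x = 0.

Lemma triM (R : realType) (x y : R) : tri x -> tri y -> tri (x * y).
Proof.
rewrite /tri; case=> [->|[->|->]]; case=> [->|[->|->]];
  rewrite ?mulr1 ?mul1r ?mulr0 ?mul0r ?mulrN1 ?opprK; auto.
Qed.

Lemma triN (R : realType) (x : R) : tri x -> tri (- x).
Proof. by rewrite /tri; case=> [->|[->|->]]; rewrite ?opprK ?oppr0; auto. Qed.

Lemma bformN (R : realType) n (G : 'M[R]_n) u v : bform G (- u) v = - bform G u v.
Proof. by rewrite /bform !mulNmx mxE. Qed.

Lemma bform0 (R : realType) n (G : 'M[R]_n) v : bform G 0 v = 0.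
Proof. by rewrite /bform !mul0mx mxE. Qed.

Lemma tri_basis (R : realType) n (G : 'M[R]_n) (b : 'I_n -> 'rV[R]_n) :
  (forall a c, a != c -> bform G (b a) (b c) = 0) ->
  (forall a, bform G (b a) (b a) = 1 \/ bform G (b a) (b a) = -1) ->
  forall a c, tri (bform G (b a) (b c)).
Proof.
move=> ho hn a c; case: (eqVneq a c) => [<-|ne]; last by rewrite /tri ho; auto.
by case: (hn a) => ->; rewrite /tri; auto.
Qed.

Lemma tri_perm (R : realType) n (G : 'M[R]_n) (b : 'I_n -> 'rV[R]_n) A :
  (forall a c, tri (bform G (b a) (b c))) -> perm_up_to_sign A b ->
  forall a c, tri (bform G (b a *m A) (b c)).
Proof.
move=> ht hp a c; have [d [->|->]] := hp a; first exact: ht.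
by rewrite bformN; apply: triN.
Qed.

Definition ext (R : realType) p n (J : 'I_p -> 'M[R]_n) (i : nat) : 'M[R]_n :=
  oapp J 0 (insub i).

Lemma ext_ord (R : realType) p n (J : 'I_p -> 'M[R]_n) (o : 'I_p) : ext J (val o) = J o.
Proof. by rewrite /ext valK. Qed.

Lemma ext_lt (R : realType) p n (J : 'I_p -> 'M[R]_n) i (h : (i < p)%N) :
  ext J i = J (Ordinal h).
Proof. exact: (ext_ord J (Ordinal h)). Qed.

Lemma ext_ge (R : realType) p n (J : 'I_p -> 'M[R]_n) i :
  (p <= i)%N -> ext J i = 0.
Proof. by move=> h; rewrite /ext insubF // ltnNge h. Qed.

Lemma kron_skew1 (R : realType) n m (G X : 'M[R]_n) (H Y : 'M[R]_m) :
  X *m G = - (G *m X^T) -> Y *m H = H *m Y^T ->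
  kron X Y *m kron G H = - (kron G H *m (kron X Y)^T).
Proof. by move=> hX hY; rewrite kron_tr !kron_mul hX hY kronNl. Qed.

Lemma kron_skew2 (R : realType) n m (G X : 'M[R]_n) (H Y : 'M[R]_m) :
  X *m G = G *m X^T -> Y *m H = - (H *m Y^T) ->
  kron X Y *m kron G H = - (kron G H *m (kron X Y)^T).
Proof. by move=> hX hY; rewrite kron_tr !kron_mul hX hY kronNr. Qed.

Lemma half_mx (R : realType) n (X : 'M[R]_n) (c : R) :
  X + X = (- (2 * c))%:M -> X = (- c)%:M.
Proof.
move=> h.
have -> : X = 2^-1 *: (X + X) by rewrite -mulr2n -scaler_nat scalerA mulVf ?scale1r // pnatr_eq0.
rewrite h scale_scalar_mx; apply: (congr1 (@scalar_mx R n)); by field.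
Qed.

Lemma kron_unit (R : realType) n m (A : 'M[R]_n) (B : 'M[R]_m) :
  A \in unitmx -> B \in unitmx -> kron A B \in unitmx.
Proof.
move=> hA hB.
have h : kron A B *m kron (invmx A) (invmx B) = 1%:M by rewrite kron_mul !mulmxV // kron11.
by case: (mulmx1_unit h).
Qed.

Unset Implicit Arguments. Set Strict Implicit.


Ltac finsc := apply: (congr1 (@scalar_mx _ _)); repeat (case: ifP => ? //); exfalso; lia.

Theorem theorem7p2 (R : realType) (r s n m : nat)
  (Jv : 'I_(r + s) -> 'M[R]_n) (G : 'M[R]_n)
  (Ju : 'I_(8 + 0) -> 'M[R]_m) (H : 'M[R]_m) :
  admissible_integral Jv G ->
  admissible Ju H ->
  pos_def H ->
  (exists bu : 'I_m -> 'rV[R]_m,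
      integral_basis Ju H bu /\ forall j, perm_up_to_sign (Ju j) bu) ->
  forall G' : 'M[R]_(n * m),
    (forall (v v' : 'rV[R]_n) (u u' : 'rV[R]_m),
        bform G' (tens v u) (tens v' u') = bform G v v' * bform H u u') ->
    exists J' : 'I_((r + 8) + s) -> 'M[R]_(n * m), admissible_integral J' G'.
Proof.
move=> [[hclv [hGs hGu] hskv] [bv [bvb bvo bvn bvt]]] [hclu [hHs hHu] hsku] _.
move=> [bu [[bub buo bun but] hperm]] G' hG'.
have eG := G'_kron hG'; subst G'.
have ACv := cl_rep_AC hclv; have ACu := cl_rep_AC hclu.
have skv : forall k, Jv k *m G = - (G *m (Jv k)^T).
  move=> k; apply: skew_of_bform => u v.
  by have := hskv (delta_mx 0 k) u v; rewrite cliff_delta.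
have sku : forall k, Ju k *m H = - (H *m (Ju k)^T).
  move=> k; apply: skew_of_bform => u v.
  by have := hsku (delta_mx 0 k) u v; rewrite cliff_delta.
have hsq : forall i, Ju i *m Ju i = - 1%:M.
  move=> i; rewrite -(@raddfN _ _ (@scalar_mx R m)); apply: half_mx; rewrite ACu eqxx /eps.
  by rewrite (ltn_ord i) mulr1.
have han : forall i j, i != j -> Ju i *m Ju j = - (Ju j *m Ju i).
  move=> i j /negbTE ne; apply/eqP; rewrite -addr_eq0 ACu ne.
  by rewrite (@raddf0 _ _ (@scalar_mx R m)).
pose Om := Pm Ju (enum 'I_(8 + 0)).
have hO2 : Om *m Om = 1%:M.
  rewrite /Om (PP hsq han (enum_uniq _)) size_enum_ord.
  by have -> : eN 8 = 36%N by []; rewrite -signr_odd /= expr0.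
have hOJ : forall j, Om *m Ju j + Ju j *m Om = 0.
  move=> j; rewrite /Om (Pcomm hsq han j (enum_uniq _)) size_enum_ord mem_enum.
  by rewrite -signr_odd /= expr1 scaleN1r addrN.
have hOH : Om *m H = H *m Om^T.
  rewrite /Om (Padj hsq han sku (enum_uniq _)) size_enum_ord.
  by have -> : eN 8 = 36%N by []; rewrite -signr_odd /= expr0 scale1r.
have hOp : perm_up_to_sign Om bu by apply: Pperm.
have ACvN : forall i i', (i < r + s)%N -> (i' < r + s)%N ->
    ext Jv i *m ext Jv i' + ext Jv i' *m ext Jv i =
    (if i == i' then - (2 * (if (i < r)%N then 1 else -1)) else 0)%:M.
  by move=> i i' hi hi'; rewrite (ext_lt _ hi) (ext_lt _ hi') ACv.
have ACuN : forall i i', (i < 8)%N -> (i' < 8)%N ->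
    ext Ju i *m ext Ju i' + ext Ju i' *m ext Ju i =
    (if i == i' then - (2 * 1) else 0)%:M.
  by move=> i i' hi hi'; rewrite (ext_lt _ hi) (ext_lt _ hi') ACu /eps /= hi.
have skvN : forall i, ext Jv i *m G = - (G *m (ext Jv i)^T).
  move=> i; case: (ltnP i (r + s)) => hi; first by rewrite (ext_lt _ hi).
  by rewrite ext_ge // mul0mx trmx0 mulmx0 oppr0.
have skuN : forall i, ext Ju i *m H = - (H *m (ext Ju i)^T).
  move=> i; case: (ltnP i (8 + 0)) => hi; first by rewrite (ext_lt _ hi).
  by rewrite ext_ge // mul0mx trmx0 mulmx0 oppr0.
have hOJN : forall j, Om *m ext Ju j + ext Ju j *m Om = 0.
  move=> i; case: (ltnP i (8 + 0)) => hi; first by rewrite (ext_lt _ hi).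
  by rewrite ext_ge // mul0mx mulmx0 addr0.
have trv : forall a c, tri (bform G (bv a) (bv c)) by apply: tri_basis.
have tru : forall a c, tri (bform H (bu a) (bu c)) by apply: tri_basis.
have trvN : forall i a c, tri (bform G (bv a *m ext Jv i) (bv c)).
  move=> i a c; case: (ltnP i (r + s)) => hi; first by rewrite (ext_lt _ hi); apply: bvt.
  by rewrite ext_ge // mulmx0 bform0 /tri; auto.
have truN : forall i a c, tri (bform H (bu a *m ext Ju i) (bu c)).
  move=> i a c; case: (ltnP i (8 + 0)) => hi; first by rewrite (ext_lt _ hi); apply: but.
  by rewrite ext_ge // mulmx0 bform0 /tri; auto.
have trO : forall a c, tri (bform H (bu a *m Om) (bu c)) by apply: tri_perm.
pose JN (i : nat) : 'M[R]_(n * m) :=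
  if (i < r)%N then kron (ext Jv i) Om
  else if (i < r + 8)%N then kron (1%:M : 'M[R]_n) (ext Ju (i - r))
  else kron (ext Jv (i - 8)) Om.
have VV : forall a b, (a < r + s)%N -> (b < r + s)%N ->
    kron (ext Jv a) Om *m kron (ext Jv b) Om + kron (ext Jv b) Om *m kron (ext Jv a) Om
    = (if a == b then - (2 * (if (a < r)%N then 1 else -1)) else 0)%:M.
  by move=> a b ha hb; rewrite !kron_mul hO2 -kronDl ACvN //; exact: kron_scal_l.
have VU : forall a j,
    kron (ext Jv a) Om *m kron (1%:M : 'M[R]_n) (ext Ju j) + kron (1%:M : 'M[R]_n) (ext Ju j) *m kron (ext Jv a) Om = 0.
  by move=> a j; rewrite !kron_mul mulmx1 mul1mx -kronDr hOJN kron0r.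
have UU : forall i j, (i < 8)%N -> (j < 8)%N ->
    kron (1%:M : 'M[R]_n) (ext Ju i) *m kron (1%:M : 'M[R]_n) (ext Ju j) + kron (1%:M : 'M[R]_n) (ext Ju j) *m kron (1%:M : 'M[R]_n) (ext Ju i)
    = (if i == j then - (2 * 1) else 0)%:M.
  move=> i j hi hj; rewrite !kron_mul mulmx1 -kronDr ACuN //; exact: kron_scal_r.
have s0 : (0 : R)%:M = 0 :> 'M[R]_(n * m) by rewrite (@raddf0 _ _ (@scalar_mx R (n * m))).
have finVV : forall a b i j : nat, (a == b) = (i == j) -> (a < r)%N = (i < r + 8)%N ->
   (if a == b then - (2 * (if (a < r)%N then 1 else -1)) else 0 : R) =
   (if i == j then - (2 * (if (i < r + 8)%N then 1 else -1)) else 0).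
  by move=> a b i j -> ->.
have finUU : forall a b i j : nat, (a == b) = (i == j) -> (i < r + 8)%N = true ->
   (if a == b then - (2 * 1) else 0 : R) =
   (if i == j then - (2 * (if (i < r + 8)%N then 1 else -1)) else 0).
  by move=> a b i j -> ->.
have ACN : forall i j, (i < r + 8 + s)%N -> (j < r + 8 + s)%N ->
    JN i *m JN j + JN j *m JN i =
    (if i == j then - (2 * (if (i < r + 8)%N then 1 else -1)) else 0)%:M.
  move=> i j hi hj; rewrite /JN.
  case: (ltnP i r) => hi1; [|case: (ltnP i (r + 8)) => hi2];
  (case: (ltnP j r) => hj1; [|case: (ltnP j (r + 8)) => hj2]).
  - rewrite VV; try lia; finsc.
  - rewrite VU (_ : (i == j) = false) ?s0 //; apply/eqP; lia.
  - rewrite VV; try lia; finsc.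
  - rewrite addrC VU (_ : (i == j) = false) ?s0 //; apply/eqP; lia.
  - rewrite UU; try lia; apply: (congr1 (@scalar_mx R _)).
    by rewrite (_ : ((i - r)%N == (j - r)%N) = (i == j)) //; apply/eqP/eqP; lia.
  - rewrite addrC VU (_ : (i == j) = false) ?s0 //; apply/eqP; lia.
  - rewrite VV; try lia; finsc.
  - rewrite VU (_ : (i == j) = false) ?s0 //; apply/eqP; lia.
  - rewrite VV; try lia; finsc.
exists (fun k => JN (val k)); split; first split.
- apply: AC_cl_rep => k l; rewrite ACN ?ltn_ord // val_eqE.
- by split; [rewrite kron_tr hGs hHs | apply: kron_unit].
- move=> z u v; apply: bform_of_skew; apply: skew_cliff => k; rewrite /JN.
  case: ifP => _; [|case: ifP => _].
  + by apply: kron_skew1.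
  + apply: kron_skew2; last exact: skuN. by rewrite trmx1 mulmx1 mul1mx.
  + by apply: kron_skew1.
pose b' (k : 'I_(n * m)) := tens (bv (dec k).1) (bu (dec k).2).
exists b'; split.
- rewrite /is_basis; have -> : \matrix_(i < n * m) b' i = kron (\matrix_i bv i) (\matrix_j bu j).
    apply/matrixP => k l.
    case/mxvec_indexP: k => i j; case/mxvec_indexP: l => i' j'.
    by rewrite kronE !mxE /b' decK tensE.
  exact: kron_unit.
- move=> a c; case/mxvec_indexP: a => i j; case/mxvec_indexP: c => i' j'.
  rewrite mxvec_index_eq /b' !decK /= hG' negb_and.
  case/orP => /negbTE h; first by rewrite bvo ?h // mul0r.
  by rewrite (buo j j') ?h // mulr0.
- move=> a; case/mxvec_indexP: a => i j; rewrite /b' !decK /= hG'.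
  by case: (bvn i) => ->; case: (bun j) => ->; rewrite ?mulr1 ?mulrN1 ?opprK; auto.
- move=> k a c /=; case/mxvec_indexP: a => i j; case/mxvec_indexP: c => i' j'.
  rewrite /b' !decK /= /JN.
  case: ifP => _; [|case: ifP => _]; rewrite tens_kron hG'; apply: triM => //.
  by rewrite mulmx1.
Qed.
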